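(* Let $G$ be an infinite locally finite graph and $D$ a finite connected graph. Identify $G$ with one of its copies $G\times\{x_0\}$ ($x_0\in V(D)$) in the Cartesian product $G\square D$. Then $G$ is faithful to $G\square D$.
   Context: A ray is a one-way infinite path; two rays of a graph $H$ are equivalent in $H$ if for every finite $S\subseteq V(H)$ some component of $H-S$ contains tails of both; the classes are the ends of $H$. A subgraph $A$ of $B$ is faithful to $B$ if (i) every end of $B$ contains a ray of $A$, and (ii) any two rays of $A$ are equivalent in $A$ if and only if they are equivalent in $B$. *)

(* Defs.v *)
From Stdlib Require Import List Relations Arith.

Record graph := Graph {
  vert :> Type;
  adj : vert -> vert -> Prop;
  adj_sym : forall x y, adj x y -> adj y x;
  adj_irrefl : forall x, ~ adj x x
}.

Arguments adj {g} _ _.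

Definition is_ray (H : graph) (r : nat -> H) : Prop :=
  (forall n m, r n = r m -> n = m) /\ (forall n, adj (r n) (r (S n))).

(* x and y lie in the same component of H - S (S a finite set given as a list):
   both avoid S and are joined by a finite walk avoiding S. *)
Definition adj_avoid (H : graph) (S : list H) (x y : H) : Prop :=
  adj x y /\ ~ In x S /\ ~ In y S.

Definition same_comp_avoid (H : graph) (S : list H) (x y : H) : Prop :=
  ~ In x S /\ ~ In y S /\ clos_refl_trans H (adj_avoid H S) x y.

Definition ray_equiv (H : graph) (r1 r2 : nat -> H) : Prop :=
  forall S : list H, exists k : nat,
    forall n m, k <= n -> k <= m -> same_comp_avoid H S (r1 n) (r2 m).

Definition faithful (A B : graph) (f : A -> B) : Prop :=
  (* (i) every end of B contains a ray of A *)
  (forall r : nat -> B, is_ray B r ->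
     exists r' : nat -> A, is_ray A r' /\ ray_equiv B (fun n => f (r' n)) r) /\
  (forall r1 r2 : nat -> A, is_ray A r1 -> is_ray A r2 ->
     (ray_equiv A r1 r2 <-> ray_equiv B (fun n => f (r1 n)) (fun n => f (r2 n)))).

Definition locally_finite (G : graph) : Prop :=
  forall v : G, exists l : list G, forall w, adj v w -> In w l.

Definition infinite_graph (G : graph) : Prop :=
  ~ exists l : list G, forall v : G, In v l.

Definition finite_graph (G : graph) : Prop :=
  exists l : list G, forall v : G, In v l.

Definition connected (G : graph) : Prop :=
  forall x y : G, clos_refl_trans G adj x y.

Definition cart_adj (G D : graph) (p q : G * D) : Prop :=
  (adj (fst p) (fst q) /\ snd p = snd q) \/ (fst p = fst q /\ adj (snd p) (snd q)).

Lemma cart_adj_sym G D p q : cart_adj G D p q -> cart_adj G D q p.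
Proof.
  unfold cart_adj; intros [[H1 H2]|[H1 H2]]; [left|right]; split;
  try apply adj_sym; auto.
Qed.

Lemma cart_adj_irrefl G D p : ~ cart_adj G D p p.
Proof.
  unfold cart_adj; intros [[H _]|[_ H]]; eapply adj_irrefl; eauto.
Qed.

Definition cart_prod (G D : graph) : graph :=
  Graph (G * D) (cart_adj G D) (cart_adj_sym G D) (cart_adj_irrefl G D).

Definition copy_emb (G D : graph) (x0 : D) : G -> cart_prod G D :=
  fun v => (v, x0).

(* Main.v *)
Require Import Defs.
From Stdlib Require Import List Relations Arith.
From Stdlib Require Import Lia Classical IndefiniteDescription.

Lemma inj_avoid (T:Type) (r: nat -> T) : (forall n m, r n = r m -> n = m) ->
  forall l : list T, exists K, forall n, K <= n -> ~ In (r n) l.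
Proof.
  intros Hinj l; induction l as [|x l [K HK]].
  - exists 0; simpl; auto.
  - destruct (classic (exists n, r n = x)) as [[n0 Hn0]|Hno].
    + exists (max K (S n0)). intros n Hn [Hx|Hin].
      * subst x. apply Hinj in Hx. lia.
      * apply (HK n); [lia|auto].
    + exists K. intros n Hn [Hx|Hin]; [apply Hno; eauto| apply (HK n); auto].
Qed.

Lemma last_visit (P : nat -> Prop) K : forall n0, P n0 -> (forall m, P m -> m < K) ->
  exists t, n0 <= t /\ P t /\ forall m, t < m -> ~ P m.
Proof.
  induction K as [|K IH]; intros n0 Hn0 HB.
  - specialize (HB _ Hn0); lia.
  - destruct (classic (P K)) as [HK|HK].
    + exists K. split; [specialize (HB _ Hn0); lia|]. split; auto.
      intros m Hm Pm. specialize (HB _ Pm). lia.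
    + apply IH; auto. intros m Pm. specialize (HB _ Pm).
      destruct (Nat.eq_dec m K); [subst; contradiction|lia].
Qed.

Lemma crt_sym (H:graph) L x y : clos_refl_trans H (adj_avoid H L) x y ->
  clos_refl_trans H (adj_avoid H L) y x.
Proof.
  induction 1.
  - apply rt_step. destruct H0 as [A [B C]]. split; [apply adj_sym; auto|auto].
  - apply rt_refl.
  - eapply rt_trans; eauto.
Qed.

Lemma ray_path (H:graph) (r: nat -> H) L K : (forall n, adj (r n) (r (S n))) ->
  (forall n, K <= n -> ~In (r n) L) -> forall a b, K<=a -> K<=b ->
  clos_refl_trans H (adj_avoid H L) (r a) (r b).
Proof.
  intros Hadj Hav.
  assert (Hf : forall d a, K <= a -> clos_refl_trans H (adj_avoid H L) (r a) (r (a+d))).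
  { induction d as [|d IH]; intros a Ha.
    - rewrite Nat.add_0_r; apply rt_refl.
    - eapply rt_trans; [apply (IH a Ha)|]. apply rt_step.
      rewrite Nat.add_succ_r. split; [apply Hadj|]. split; apply Hav; lia. }
  intros a b Ha Hb. destruct (le_lt_dec a b).
  - replace b with (a + (b - a)) by lia. auto.
  - apply crt_sym. replace a with (b + (a - b)) by lia. auto.
Qed.

Fixpoint tseq (nx : nat -> nat) (i:nat) : nat :=
  match i with 0 => nx 0 | S i => nx (S (tseq nx i)) end.

Theorem lemma17 (G D : graph) (x0 : D) :
  infinite_graph G -> locally_finite G ->
  finite_graph D -> connected D ->
  faithful G (cart_prod G D) (copy_emb G D x0).
Proof.
  intros _ _ [lD HlD] Hconn.
  assert (Hfib : forall (L : list (G*D)) (g : G), ~ In g (map fst L) ->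
    forall a b, clos_refl_trans D adj a b ->
    clos_refl_trans (cart_prod G D) (adj_avoid (cart_prod G D) L) (g,a) (g,b)).
  { intros L g Hg a b Hab. induction Hab.
    - apply rt_step. split; [right; simpl; auto|].
      split; intro Hin; apply Hg; apply in_map_iff; (eexists; split; [|exact Hin]; reflexivity).
    - apply rt_refl.
    - eapply rt_trans; eauto. }
  split.
  - intros r [Hinj Hadj].
    set (w := fun n => fst (r n)).
    assert (Hbd : forall s, exists K, forall m, w m = w s -> m < K).
    { intros s. destruct (inj_avoid _ r Hinj (map (fun d => (w s, d)) lD)) as [K HK].
      exists K. intros m Hm. destruct (le_lt_dec K m) as [Hle|]; auto.
      exfalso. apply (HK m Hle). apply in_map_iff. exists (snd (r m)). split; auto.
      rewrite <- Hm. unfold w. destruct (r m); reflexivity. }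
    assert (Hnext : forall s, exists t, s <= t /\ w t = w s /\ forall m, t < m -> w m <> w s).
    { intros s. destruct (Hbd s) as [K HK]. apply (last_visit (fun m => w m = w s) K); auto. }
    assert (Hch : exists nx : nat -> nat, forall s, s <= nx s /\ w (nx s) = w s /\
               forall m, nx s < m -> w m <> w s).
    { exists (fun s => proj1_sig (constructive_indefinite_description _ (Hnext s))).
      intros s. apply (proj2_sig (constructive_indefinite_description _ (Hnext s))). }
    destruct Hch as [nx Hnx].
    set (t := tseq nx).
    assert (Hlast : forall i m, t i < m -> w m <> w (t i)).
    { intros i m Hm. assert (Hs : exists s, t i = nx s) by (destruct i; unfold t; simpl; eauto).
      destruct Hs as [s Hs]. rewrite Hs in *. destruct (Hnx s) as [A [B C]].
      rewrite B. auto. }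
    assert (Hstep : forall i, t i < t (S i)).
    { intros i. unfold t; simpl. destruct (Hnx (S (tseq nx i))) as [A _]. lia. }
    assert (Hmono : forall i j, i < j -> t i < t j).
    { intros i j Hij. induction Hij.
      - auto.
      - specialize (Hstep m). lia. }
    assert (Hge : forall i, i <= t i).
    { induction i; [lia|]. specialize (Hstep i). lia. }
    set (r' := fun i => w (t i)).
    assert (Hr'inj : forall n m, r' n = r' m -> n = m).
    { intros n m E. unfold r' in E. destruct (Nat.lt_total n m) as [Hl|[Hl|Hl]]; auto.
      - exfalso. apply (Hlast n (t m)); auto.
      - exfalso. apply (Hlast m (t n)); auto. }
    exists r'. split.
    + split; auto. intros i. unfold r'.
      assert (E : w (t (S i)) = w (S (t i))).
      { unfold t; simpl. destruct (Hnx (S (tseq nx i))) as [_ [B _]]. exact B. }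
      rewrite E. destruct (Hadj (t i)) as [[A _]|[A _]].
      * exact A.
      * exfalso. apply (Hlast i (S (t i))); [lia|]. unfold w. symmetry; exact A.
    + intros L. destruct (inj_avoid _ r' Hr'inj (map fst L)) as [K1 HK1].
      destruct (inj_avoid _ r Hinj L) as [K2 HK2].
      exists (max K1 K2). intros n m Hn Hm.
      split; [|split].
      * intro Hin. apply (HK1 n); [lia|]. apply in_map_iff. eexists; split; [|exact Hin]. reflexivity.
      * apply HK2; lia.
      * eapply rt_trans.
        -- apply (Hfib L (r' n) (HK1 n ltac:(lia)) x0 (snd (r (t n))) (Hconn _ _)).
        -- assert (E : (r' n, snd (r (t n))) = r (t n)).
           { unfold r', w. destruct (r (t n)); reflexivity. }
           simpl in E |- *. rewrite E.
           apply (ray_path _ r L K2 Hadj); [intros; apply HK2; lia | specialize (Hge n); lia | lia].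

  - intros r1 r2 Hr1 Hr2. split.
    + intros H L. destruct (H (map fst L)) as [k Hk]. exists k.
      intros n m Hn Hm. destruct (Hk n m Hn Hm) as [A [B C]].
      unfold copy_emb. split; [|split].
      * intro Hin. apply A. apply in_map_iff. eexists; split; [|exact Hin]. reflexivity.
      * intro Hin. apply B. apply in_map_iff. eexists; split; [|exact Hin]. reflexivity.
      * clear Hk A B. induction C.
        -- apply rt_step. destruct H0 as [P [Q R]]. split; [left; simpl; auto|].
           split; intro Hin; [apply Q|apply R]; apply in_map_iff; (eexists; split; [|exact Hin]; reflexivity).
        -- apply rt_refl.
        -- eapply rt_trans; [apply IHC1|apply IHC2].
    + intros H L. destruct (H (list_prod L lD)) as [k Hk]. exists k.
      intros n m Hn Hm. destruct (Hk n m Hn Hm) as [A [B C]].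
      assert (Hnot : forall p : G * D, ~ In p (list_prod L lD) -> ~ In (fst p) L).
      { intros [g d] Hp Hg. apply Hp. apply in_prod; auto. }
      split; [|split].
      * apply (Hnot (r1 n, x0)); auto.
      * apply (Hnot (r2 m, x0)); auto.
      * change (r1 n) with (fst (copy_emb G D x0 (r1 n))).
        change (r2 m) with (fst (copy_emb G D x0 (r2 m))).
        clear Hk A B. induction C.
        -- destruct H0 as [P [Q R]]. destruct P as [[P1 _]|[P1 _]].
           ++ apply rt_step. split; [exact P1|split; apply Hnot; auto].
           ++ rewrite P1. apply rt_refl.
        -- apply rt_refl.
        -- eapply rt_trans; eauto.
Qed.
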